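(* The number of IP-SEG graphs on the labeled vertex set $\{1,\dots,n\}$ is at most $2^{O(n\log n)}$; more precisely, each IP-SEG graph on $n$ vertices can be encoded by assigning $O(\log n)$ bits to each vertex such that adjacency of two vertices is determined by their two labels alone (an implicit representation).
   Context: Let $L_1$ and $L_2$ be two distinct parallel horizontal lines in the plane. A closed straight line segment is an interval segment if both of its endpoints lie on the same line $L_i$, and a permutation segment if one endpoint lies on $L_1$ and the other on $L_2$. An IP-SEG model is a finite family of interval and permutation segments; its intersection graph has one vertex per segment, two vertices being adjacent iff the corresponding segments have nonempty intersection. A graph is an IP-SEG graph if it is isomorphic to the intersection graph of some IP-SEG model. *)

(* Defs.v *)
From Stdlib Require Import Reals.
From mathcomp Require Import all_boot.
Set Implicit Arguments. Unset Strict Implicit. Unset Printing Implicit Defensive.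

Definition point := (R * R)%type.

Record segment := Seg { sa : point; sb : point }.

Definition on_segment (s : segment) (z : point) : Prop :=
  exists t : R, Rle R0 t /\ Rle t R1 /\
    fst z = Rplus (Rmult (Rminus R1 t) (fst (sa s))) (Rmult t (fst (sb s))) /\
    snd z = Rplus (Rmult (Rminus R1 t) (snd (sa s))) (Rmult t (snd (sb s))).

Definition seg_intersect (s1 s2 : segment) : Prop :=
  exists z : point, on_segment s1 z /\ on_segment s2 z.

Definition on_line (y : R) (p : point) : Prop := snd p = y.

Definition interval_segment (y1 y2 : R) (s : segment) : Prop :=
  sa s <> sb s /\
  ((on_line y1 (sa s) /\ on_line y1 (sb s)) \/ (on_line y2 (sa s) /\ on_line y2 (sb s))).

Definition permutation_segment (y1 y2 : R) (s : segment) : Prop :=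
  (on_line y1 (sa s) /\ on_line y2 (sb s)) \/ (on_line y2 (sa s) /\ on_line y1 (sb s)).

Definition ipseg_segment (y1 y2 : R) (s : segment) : Prop :=
  interval_segment y1 y2 s \/ permutation_segment y1 y2 s.

Definition graph (n : nat) := {ffun 'I_n * 'I_n -> bool}.

(* Indexing the model by the vertices is the isomorphism. *)
Definition ipseg_graph (n : nat) (g : graph n) : Prop :=
  (forall u : 'I_n, g (u, u) = false) /\
  exists (y1 y2 : R), y1 <> y2 /\
  exists f : 'I_n -> segment,
    (forall v, ipseg_segment y1 y2 (f v)) /\
    (forall u v : 'I_n, u <> v -> (g (u, v) = true <-> seg_intersect (f u) (f v))).

(* log n, rounded, plus one (so that it is >= 1 also for n <= 1). *)
Definition lg1 (n : nat) : nat := (trunc_log 2 n).+1.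

(* Main.v *)
Require Import Defs.
From Stdlib Require Import Reals.
From mathcomp Require Import all_boot.
From Stdlib Require Import Lra Psatz.
From mathcomp Require Import zify.
Set Implicit Arguments. Unset Strict Implicit. Unset Printing Implicit Defensive.

Definition Rleb (a b : R) : bool := if Rle_dec a b then true else false.
Lemma RlebP a b : reflect (Rle a b) (Rleb a b).
Proof. by rewrite /Rleb; case: Rle_dec => H; constructor. Qed.
Definition eqRb (a b : R) : bool := if Req_dec_T a b then true else false.
Lemma eqRb_refl a : eqRb a a = true.
Proof. by rewrite /eqRb; case: Req_dec_T. Qed.
Lemma eqRb_neq a b : a <> b -> eqRb a b = false.
Proof. by rewrite /eqRb; case: Req_dec_T. Qed.

Section Adj.
Variables (T : Type) (le : T -> T -> bool).
Definition btw x l r := le l x && le x r.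
Definition ovl l r l' r' := le l r' && le l' r.
Definition adjF (k : nat) (l r : T) (k' : nat) (l' r' : T) : bool :=
  match k, k' with
  | 0, 0 => ovl l r l' r'
  | 1, 1 => ovl l r l' r'
  | 0, 1 => false
  | 1, 0 => false
  | 0, _ => btw l' l r
  | 1, _ => btw r' l r
  | _, 0 => btw l l' r'
  | _, 1 => btw r l' r'
  | _, _ => (le l l' && le r' r) || (le l' l && le r r')
  end.
End Adj.

Lemma adjF_transfer (T1 T2 : Type) (le1 : T1 -> T1 -> bool) (le2 : T2 -> T2 -> bool)
  (h : T2 -> T1) (P : T2 -> Prop) k a b k' c d :
  (forall x y, P x -> P y -> le1 (h x) (h y) = le2 x y) -> P a -> P b -> P c -> P d ->
  adjF le1 k (h a) (h b) k' (h c) (h d) = adjF le2 k a b k' c d.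
Proof.
move=> H Pa Pb Pc Pd.
by case: k => [|[|k]]; case: k' => [|[|k']]; rewrite /= /btw /ovl ?H.
Qed.

Section Geo.
Local Open Scope R_scope.

Lemma interp_le a b x : a <= b -> a <= x <= b -> exists t, 0 <= t <= 1 /\ x = (1-t)*a + t*b.
Proof.
move=> Hab [H1 H2].
destruct (Req_dec a b) as [E|E].
  subst; exists 0; split; [lra|]; lra.
have Hp : 0 < b - a by lra.
exists ((x - a) / (b - a)); split; [split|].
- apply Rmult_le_pos; [lra|]. apply Rlt_le, Rinv_0_lt_compat; lra.
- apply (Rmult_le_reg_r (b - a)); [lra|].
  rewrite /Rdiv Rmult_assoc Rinv_l; lra.
- field; lra.
Qed.

Lemma interp a b x : Rmin a b <= x <= Rmax a b -> exists t, 0 <= t <= 1 /\ x = (1-t)*a + t*b.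
Proof.
rewrite /Rmin /Rmax; case: Rle_dec => H Hx.
  exact: interp_le.
have [t [Ht Hx']] := interp_le (b:=a) (a:=b) (x:=x) ltac:(lra) Hx.
exists (1 - t); split; [lra|]. rewrite Hx'; ring.
Qed.

Lemma pp_dir l l' r r' t: 0<=t<=1 -> (1-t)*(l-l') + t*(r-r') = 0 -> (l<=l' /\ r'<=r) \/ (l'<=l /\ r<=r').
Proof.
intros Ht E.
destruct (Rle_dec l l'), (Rle_dec r' r); try (left; split; lra).
- destruct (Req_dec l l'); [right; split; lra|].
  exfalso. destruct (Req_dec t 0). subst; lra.
  assert (0 < t) by lra. assert (t*(r-r') < 0) by nra. assert ((1-t)*(l-l') <= 0) by nra. lra.
- destruct (Req_dec r r'); [right; split; lra|].
  exfalso. destruct (Req_dec t 1). subst; lra.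
  assert (0 < 1-t) by lra. assert ((1-t)*(l-l') > 0) by nra. assert (t*(r-r') >= 0) by nra. lra.
- right. split; lra.
Qed.

Definition desc (y1 y2 : R) (k : nat) (l r : R) (z : point) : Prop :=
  match k with
  | 0%nat => snd z = y1 /\ l <= fst z <= r
  | 1%nat => snd z = y2 /\ l <= fst z <= r
  | _ => exists t, 0 <= t <= 1 /\ fst z = (1-t)*l + t*r /\ snd z = (1-t)*y1 + t*y2
  end.

Lemma bool_iff (b c : bool) : (b = true <-> c = true) -> b = c.
Proof. by case: b; case: c => // [[H1 H2]]; [symmetry|]; auto. Qed.

Lemma desc_int y1 y2 k l r k' l' r' :
  y1 <> y2 -> ((k < 2)%N -> l <= r) -> ((k' < 2)%N -> l' <= r') ->
  ((exists z, desc y1 y2 k l r z /\ desc y1 y2 k' l' r' z) <->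
   adjF Rleb k l r k' l' r' = true).
Proof.
move=> Hne Hk Hk'.
case: k Hk => [|[|k]] Hk; case: k' Hk' => [|[|k']] Hk';
  rewrite /= /btw /ovl; split.
- move=> [z [[Hy Hx] [Hy' Hx']]]; apply/andP; split; apply/RlebP; lra.
- move/andP=> [/RlebP H1 /RlebP H2]. have := Hk isT; have := Hk' isT => ? ?.
  exists (Rmax l l', y1); rewrite /Rmax /=; case: Rle_dec => ?; repeat split; lra.
- move=> [z [[Hy _] [Hy' _]]]; exfalso; apply: Hne; congruence.
- by [].
- move=> [z [[Hy Hx] [t [Ht [Hx' Hy']]]]].
  have Ht0 : t = 0 by nra.
  subst t; apply/andP; split; apply/RlebP; lra.
- move/andP=> [/RlebP H1 /RlebP H2].
  exists (l', y1); split; [simpl; lra|]. exists 0; simpl; split; [lra|]; split; ring.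
- move=> [z [[Hy _] [Hy' _]]]; exfalso; apply: Hne; congruence.
- by [].
- move=> [z [[Hy Hx] [Hy' Hx']]]; apply/andP; split; apply/RlebP; lra.
- move/andP=> [/RlebP H1 /RlebP H2]. have := Hk isT; have := Hk' isT => ? ?.
  exists (Rmax l l', y2); rewrite /Rmax /=; case: Rle_dec => ?; repeat split; lra.
- move=> [z [[Hy Hx] [t [Ht [Hx' Hy']]]]].
  have Ht0 : t = 1 by nra.
  subst t; apply/andP; split; apply/RlebP; lra.
- move/andP=> [/RlebP H1 /RlebP H2].
  exists (r', y2); split; [simpl; lra|]. exists 1; simpl; split; [lra|]; split; ring.
- move=> [z [[t [Ht [Hx' Hy']]] [Hy Hx]]].
  have Ht0 : t = 0 by nra.
  subst t; apply/andP; split; apply/RlebP; lra.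
- move/andP=> [/RlebP H1 /RlebP H2].
  exists (l, y1); split; [|simpl; lra]. exists 0; simpl; split; [lra|]; split; ring.
- move=> [z [[t [Ht [Hx' Hy']]] [Hy Hx]]].
  have Ht0 : t = 1 by nra.
  subst t; apply/andP; split; apply/RlebP; lra.
- move/andP=> [/RlebP H1 /RlebP H2].
  exists (r, y2); split; [|simpl; lra]. exists 1; simpl; split; [lra|]; split; ring.
- move=> [z [[t [Ht [Hx Hy]]] [t' [Ht' [Hx' Hy']]]]].
  have Htt : t' = t by nra.
  subst t'.
  have E : (1-t)*(l-l') + t*(r-r') = 0 by nra.
  case: (pp_dir Ht E) => [[H1 H2]|[H1 H2]]; apply/orP; [left|right];
    apply/andP; split; apply/RlebP; lra.
- case/orP=> /andP [/RlebP H1 /RlebP H2].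
  + have [t [Ht E]] : exists t, 0 <= t <= 1 /\ 0 = (1-t)*(l-l') + t*(r-r').
      apply: interp; rewrite /Rmin /Rmax; case: Rle_dec => ?; lra.
    exists ((1-t)*l + t*r, (1-t)*y1 + t*y2); split; exists t; simpl; repeat split; nra.
  + have [t [Ht E]] : exists t, 0 <= t <= 1 /\ 0 = (1-t)*(l-l') + t*(r-r').
      apply: interp; rewrite /Rmin /Rmax; case: Rle_dec => ?; lra.
    exists ((1-t)*l + t*r, (1-t)*y1 + t*y2); split; exists t; simpl; repeat split; nra.
Qed.
End Geo.


Section Geo2.
Local Open Scope R_scope.
Variables y1 y2 : R.

Definition kind (s : segment) : nat :=
  if eqRb (snd (sa s)) y1 && eqRb (snd (sb s)) y1 then 0%nat
  else if eqRb (snd (sa s)) y2 && eqRb (snd (sb s)) y2 then 1%nat else 2%nat.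
Definition v1 (s : segment) : R :=
  match kind s with
  | 0%nat | 1%nat => Rmin (fst (sa s)) (fst (sb s))
  | _ => if eqRb (snd (sa s)) y1 then fst (sa s) else fst (sb s) end.
Definition v2 (s : segment) : R :=
  match kind s with
  | 0%nat | 1%nat => Rmax (fst (sa s)) (fst (sb s))
  | _ => if eqRb (snd (sa s)) y1 then fst (sb s) else fst (sa s) end.

Lemma v1_le s : (kind s < 2)%N -> v1 s <= v2 s.
Proof.
rewrite /v1 /v2; case: (kind s) => [|[|k]] //= _; rewrite /Rmin /Rmax;
  case: Rle_dec; lra.
Qed.

Lemma v1_coord s : v1 s = fst (sa s) \/ v1 s = fst (sb s).
Proof.
rewrite /v1; case: (kind s) => [|[|k]] /=; rewrite ?/Rmin; try case: Rle_dec;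
  try case: eqRb; auto.
Qed.
Lemma v2_coord s : v2 s = fst (sa s) \/ v2 s = fst (sb s).
Proof.
rewrite /v2; case: (kind s) => [|[|k]] /=; rewrite ?/Rmax; try case: Rle_dec;
  try case: eqRb; auto.
Qed.

Lemma hor_on a b y z :
  (exists t, 0 <= t /\ t <= 1 /\ fst z = (1-t)*a + t*b /\ snd z = (1-t)*y + t*y) <->
  (snd z = y /\ Rmin a b <= fst z <= Rmax a b).
Proof.
split.
- move=> [t [H0 [H1 [Hx Hy]]]]; split; [rewrite Hy; ring|].
  rewrite Hx /Rmin /Rmax; case: Rle_dec => ?; split; nra.
- move=> [Hy Hx]; have [t [Ht E]] := interp Hx.
  exists t; repeat split; try lra.
Qed.

Lemma seg_desc s z : y1 <> y2 -> ipseg_segment y1 y2 s ->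
  (on_segment s z <-> desc y1 y2 (kind s) (v1 s) (v2 s) z).
Proof.
move=> Hne Hs.
have Hne' : y2 <> y1 by auto.
case: s Hs => [[ax ay] [bx by_]].
rewrite /ipseg_segment /interval_segment /permutation_segment /on_line /on_segment
  /v1 /v2 /kind /=.
move=> [[_ [[-> ->]|[-> ->]]]|[[-> ->]|[-> ->]]];
  rewrite ?eqRb_refl ?(eqRb_neq Hne) ?(eqRb_neq Hne') /=.
- exact: hor_on.
- exact: hor_on.
- split.
  + move=> [t [H0 [H1 [Hx Hy]]]]; exists t; repeat split; auto.
  + move=> [t [[H0 H1] [Hx Hy]]]; exists t; repeat split; auto.
- split.
  + move=> [t [H0 [H1 [Hx Hy]]]]; exists (1 - t); repeat split; lra.
  + move=> [t [[H0 H1] [Hx Hy]]]; exists (1 - t); repeat split; lra.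
Qed.

Lemma seg_int s s' : y1 <> y2 -> ipseg_segment y1 y2 s -> ipseg_segment y1 y2 s' ->
  (seg_intersect s s' <->
   adjF Rleb (kind s) (v1 s) (v2 s) (kind s') (v1 s') (v2 s') = true).
Proof.
move=> Hne Hs Hs'.
have H := @desc_int y1 y2 (kind s) (v1 s) (v2 s) (kind s') (v1 s') (v2 s') Hne
  (@v1_le s) (@v1_le s').
rewrite -H /seg_intersect; split; move=> [z [H1 H2]]; exists z;
  have := @seg_desc s z Hne Hs; have := @seg_desc s' z Hne Hs'; tauto.
Qed.
End Geo2.


Section Key.
Variables (T : finType) (coord : T -> R).
Definition key (x : R) : nat := #|[set e | ~~ Rleb x (coord e)]|.
Lemma key_mono e e' : (key (coord e) <= key (coord e'))%N = Rleb (coord e) (coord e').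
Proof.
rewrite /key; case: (RlebP (coord e) (coord e')) => H.
- apply: subset_leq_card; apply/subsetP => x; rewrite !inE.
  case: (RlebP (coord e) (coord x)) => //= H1 _.
  apply/negP => /RlebP H2. lra.
- apply/negbTE; rewrite -ltnNge; apply: proper_card; apply/properP; split.
  + apply/subsetP => x; rewrite !inE.
    case: (RlebP (coord e') (coord x)) => //= H1 _.
    apply/negP => /RlebP H2. lra.
  + exists e'; rewrite !inE.
    * by apply/negP => /RlebP H2; apply: H; lra.
    * by apply/negPn/RlebP; lra.
Qed.
Lemma key_le x : (key x <= #|T|)%N.
Proof. exact: max_card. Qed.
End Key.

Fixpoint enc (m k : nat) : seq bool :=
  if m is m'.+1 then odd k :: enc m' k./2 else [::].
Fixpoint dec (s : seq bool) : nat := if s is b :: s' then b + (dec s').*2 else 0.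
Lemma size_enc m k : size (enc m k) = m.
Proof. by elim: m k => //= m IH k; rewrite IH. Qed.
Lemma encK m k : k < 2 ^ m -> dec (enc m k) = k.
Proof.
elim: m k => [|m IH] k /=.
  by rewrite expn0 ltnS leqn0 => /eqP->.
move=> lt; rewrite IH ?odd_double_half //.
by rewrite ltn_half_double -mul2n -expnS.
Qed.

Definition labseq m (k p q : nat) := enc 2 k ++ enc m p ++ enc m q.
Definition dk (s : seq bool) := dec (take 2 s).
Definition dp (s : seq bool) := dec (take (size (drop 2 s))./2 (drop 2 s)).
Definition dq (s : seq bool) := dec (drop (size (drop 2 s))./2 (drop 2 s)).
Definition Dec (s t : seq bool) : bool := adjF leq (dk s) (dp s) (dq s) (dk t) (dp t) (dq t).

Lemma labseqK m k p q : k < 4 -> p < 2 ^ m -> q < 2 ^ m ->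
  [/\ dk (labseq m k p q) = k, dp (labseq m k p q) = p & dq (labseq m k p q) = q].
Proof.
move=> hk hp hq.
have h2 : size (enc 2 k) = 2 by rewrite size_enc.
have hd : drop 2 (labseq m k p q) = enc m p ++ enc m q.
  by rewrite /labseq -{1}h2 drop_size_cat.
have hs : (size (enc m p ++ enc m q))./2 = m.
  by rewrite size_cat !size_enc addnn doubleK.
have hm : size (enc m p) = m by rewrite size_enc.
rewrite /dk /dp /dq hd hs; split.
- by rewrite /labseq -h2 take_size_cat // encK.
- by rewrite -{1}hm take_size_cat // encK.
- by rewrite -{1}hm drop_size_cat // encK.
Qed.


Definition mm n := (trunc_log 2 n).+2.

Lemma rep n (g : graph n) : ipseg_graph g -> exists lab : 'I_n -> nat * nat * nat,
  (forall v, [/\ (lab v).1.1 < 3, (lab v).1.2 < 2 ^ mm n & (lab v).2 < 2 ^ mm n]) /\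
  (forall u v, u <> v -> g (u, v) =
     adjF leq (lab u).1.1 (lab u).1.2 (lab u).2 (lab v).1.1 (lab v).1.2 (lab v).2).
Proof.
move=> [Hl [y1 [y2 [Hne [f [Hseg Hadj]]]]]].
pose coord (e : 'I_n * bool) := if e.2 then fst (sa (f e.1)) else fst (sb (f e.1)).
pose K := key coord.
have Kb x : K x < 2 ^ mm n.
  apply: (leq_ltn_trans (key_le coord x)).
  rewrite card_prod card_ord card_bool /mm expnSr ltn_mul2r /=.
  exact: trunc_log_ltn.
have Pc w : forall x, x = fst (sa (f w)) \/ x = fst (sb (f w)) -> exists e, x = coord e.
  move=> x [->|->].
  - by exists (w, true).
  - by exists (w, false).
exists (fun v => (kind y1 y2 (f v), K (v1 y1 y2 (f v)), K (v2 y1 y2 (f v)))).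
split.
  move=> v /=; split => //; rewrite /kind; do 2 case: ifP => _ //.
move=> u v Huv /=.
rewrite (adjF_transfer (le2 := Rleb) (P := fun x => exists e, x = coord e)).
- apply: bool_iff.
  have := Hadj u v Huv; have := @seg_int y1 y2 (f u) (f v) Hne (Hseg u) (Hseg v); tauto.
- move=> x y [e ->] [e' ->]; exact: key_mono.
- by apply: (Pc u); apply: v1_coord.
- by apply: (Pc u); apply: v2_coord.
- by apply: (Pc v); apply: v1_coord.
- by apply: (Pc v); apply: v2_coord.
Qed.


Lemma decode_ok m (a b : nat * nat * nat) :
  a.1.1 < 3 -> a.1.2 < 2 ^ m -> a.2 < 2 ^ m ->
  b.1.1 < 3 -> b.1.2 < 2 ^ m -> b.2 < 2 ^ m ->
  Dec (labseq m a.1.1 a.1.2 a.2) (labseq m b.1.1 b.1.2 b.2) =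
  adjF leq a.1.1 a.1.2 a.2 b.1.1 b.1.2 b.2.
Proof.
move=> ha1 ha2 ha3 hb1 hb2 hb3; rewrite /Dec.
have [-> -> ->] := labseqK (ltn_trans ha1 (isT : 3 < 4)) ha2 ha3.
by have [-> -> ->] := labseqK (ltn_trans hb1 (isT : 3 < 4)) hb2 hb3.
Qed.

Theorem mainTheorem2 :
  exists c : nat,
    (forall n : nat, exists S : {set graph n},
        #|S| <= 2 ^ (c * n * lg1 n) /\
        (forall g : graph n, ipseg_graph g -> g \in S)) /\
    (exists D : seq bool -> seq bool -> bool,
      forall (n : nat) (g : graph n), ipseg_graph g ->
        exists lab : 'I_n -> seq bool,
          (forall v, size (lab v) <= c * lg1 n) /\
          (forall u v : 'I_n, u <> v -> g (u, v) = D (lab u) (lab v))).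
Proof.
exists 6; split.
- move=> n.
  pose T := ('I_3 * 'I_(2 ^ mm n) * 'I_(2 ^ mm n))%type.
  pose lbl (x : T) := labseq (mm n) x.1.1 x.1.2 x.2.
  pose F (lab : {ffun 'I_n -> T}) : graph n :=
    [ffun uv => (uv.1 != uv.2) && Dec (lbl (lab uv.1)) (lbl (lab uv.2))].
  exists (F @: setT); split.
  + apply: leq_trans (leq_imset_card _ _) _.
    rewrite cardsT card_ffun !card_prod !card_ord.
    apply: (@leq_trans ((2 ^ (2 + mm n + mm n)) ^ n)).
      case: n {F lbl T} => [|n']; first by rewrite !expn0.
      rewrite leq_exp2r // !expnD.
      by apply: leq_mul => //; apply: leq_mul.
    rewrite -expnM leq_exp2l // /mm /lg1; nia.
  + move=> g Hg; have [lab [Hb Hr]] := rep Hg.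
    have H1 v : (lab v).1.1 < 3 by case: (Hb v).
    have H2 v : (lab v).1.2 < 2 ^ mm n by case: (Hb v).
    have H3 v : (lab v).2 < 2 ^ mm n by case: (Hb v).
    apply/imsetP.
    exists [ffun v => (Ordinal (H1 v), Ordinal (H2 v), Ordinal (H3 v))]; first by rewrite inE.
    apply/ffunP => -[u v]; rewrite !ffunE /=.
    case: (eqVneq u v) => [->|Huv]; first by rewrite Hg.1.
    rewrite Hr; last by apply/eqP.
    by rewrite /lbl /= decode_ok.
- exists Dec => n g Hg; have [lab [Hb Hr]] := rep Hg.
  exists (fun v => labseq (mm n) (lab v).1.1 (lab v).1.2 (lab v).2); split.
  + move=> v; rewrite /labseq !size_cat !size_enc /mm /lg1; lia.
  + move=> u v Huv; rewrite Hr //.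
    case: (Hb u) => ? ? ?; case: (Hb v) => ? ? ?.
    by rewrite decode_ok.
Qed.
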